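(* Each of the following families of graphs is feasible, i.e. for every integer $n \ge 1$ and every integer $m$ with $0 \le m \le \binom{n}{2}$ the family contains a graph with $n$ vertices and $m$ edges: (1) induced $K_{1,r}$-free graphs, for any fixed $r\geq 3$, where $K_{1,r}$ is the star with $r$ leaves; (2) induced $P_r$-free graphs, for any fixed $r \geq 3$, where $P_r$ is the path with $r$ edges; (3) induced $rK_2$-free graphs, for any fixed $r \geq 2$, where $rK_2$ is the disjoint union of $r$ edges; (4) chordal graphs.
   Context: All graphs are finite and simple. A graph is induced $H$-free if it has no induced subgraph isomorphic to $H$. A graph is chordal if every cycle of length at least 4 has a chord. *)

(* Defs.v *)
From mathcomp Require Import all_boot.
Set Implicit Arguments. Unset Strict Implicit. Unset Printing Implicit Defensive.

Definition simple_graph (T : finType) (e : rel T) : Prop :=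
  symmetric e /\ irreflexive e.

Definition edge_set (T : finType) (e : rel T) : {set {set T}} :=
  [set A : {set T} | (#|A| == 2) && [forall x in A, forall y in A, (x != y) ==> e x y]].

Definition num_edges (T : finType) (e : rel T) : nat := #|edge_set e|.

Definition has_induced (U : finType) (h : rel U) (T : finType) (e : rel T) : Prop :=
  exists f : U -> T, injective f /\ forall u v, e (f u) (f v) = h u v.

Definition induced_free (U : finType) (h : rel U) (T : finType) (e : rel T) : Prop :=
  ~ has_induced h e.

Definition star_rel (r : nat) : rel 'I_r.+1 :=
  fun i j => (i != j) && ((nat_of_ord i == 0) || (nat_of_ord j == 0)).

Definition path_rel (r : nat) : rel 'I_r.+1 :=
  fun i j => ((nat_of_ord i).+1 == j) || ((nat_of_ord j).+1 == i).

(* rK_2: vertices 0..2r-1, edges {2k, 2k+1}. *)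
Definition matching_rel (r : nat) : rel 'I_(r.*2) :=
  fun i j => (i != j) && ((nat_of_ord i)./2 == (nat_of_ord j)./2).

(* A cycle is a
   duplicate-free sequence s with e between cyclically consecutive vertices;
   a chord is an edge between two vertices of s not consecutive on the cycle. *)
Definition chordal (T : finType) (e : rel T) : Prop :=
  forall s : seq T, uniq s -> 4 <= size s -> cycle e s ->
    exists x y, [/\ x \in s, y \in s, x != y, e x y &
                    (next s x != y) && (next s y != x)].

Definition graph_family := forall T : finType, rel T -> Prop.

Definition feasible (F : graph_family) : Prop :=
  forall n m : nat, 1 <= n -> m <= 'C(n, 2) ->
    exists e : rel 'I_n, simple_graph e /\ num_edges e = m /\ F _ e.

(* Main.v *)
Require Import Defs.
From mathcomp Require Import all_boot zify.

Definition ge {n : nat} (m : nat) : rel 'I_n :=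
  fun i j => (i != j) && ('C(maxn i j, 2) + minn i j < m).

Lemma ge_sym n m : symmetric (@ge n m).
Proof. by move=> i j; rewrite /ge eq_sym maxnC minnC. Qed.

Lemma ge_simple n m : simple_graph (@ge n m).
Proof. split; first exact: ge_sym. by move=> i; rewrite /ge eqxx. Qed.

Lemma rank_lt a b : b < a -> 'C(a, 2) + b < 'C(a.+1, 2).
Proof. move=> h; rewrite binS bin1; lia. Qed.

Lemma ge_below n m (x y z w : 'I_n) :
  ge m x y -> z < x -> w < x -> z != w -> ge m z w.
Proof.
rewrite /ge => /andP[_ H] zx wx zw; rewrite zw /=.
have h1 : minn z w < maxn z w.
  have : (z : nat) != w by []. lia.
have h2 := @rank_lt _ _ h1.
have h3 : 'C((maxn z w).+1, 2) <= 'C(maxn x y, 2).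
  apply: leq_bin2l; lia.
lia.
Qed.

Lemma sum_min n m : \sum_(j < n) minn j (m - 'C(j, 2)) = minn m 'C(n, 2).
Proof.
elim: n => [|n IH]; first by rewrite big_ord0 bin0n; lia.
rewrite big_ord_recr /= IH binS bin1; lia.
Qed.

Lemma inner_card n m (j : 'I_n) :
  \sum_(i : 'I_n | (i < j) && ('C(j, 2) + i < m)) 1 = minn j (m - 'C(j, 2)).
Proof.
have hk : minn j (m - 'C(j, 2)) <= n by have := ltn_ord j; lia.
rewrite (eq_bigl (fun i : 'I_n => true && (i < minn j (m - 'C(j, 2))))); last first.
  move=> i /=; apply/idP/idP; lia.
have := @big_ord_widen_cond nat 0 addn _ n xpredT (fun _ => 1) hk.
move=> <-. by rewrite sum1_card card_ord.
Qed.

Lemma ge_edges n m : m <= 'C(n, 2) -> num_edges (@ge n m) = m.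
Proof.
move=> hm; rewrite /num_edges.
pose P := [set p : 'I_n * 'I_n | (p.2 < p.1) && ('C(p.1, 2) + p.2 < m)].
have -> : edge_set (@ge n m) = [set [set p.1; p.2] | p in P].
  apply/setP => A; rewrite inE; apply/idP/imsetP.
  - case/andP => /cards2P [x [y [xy ->]]] /forallP Hf.
    have exy : ge m x y by have := Hf x; rewrite !inE eqxx => /forall_inP/(_ y); rewrite !inE eqxx orbT xy; apply.
    case/andP: exy => _ hr.
    case: (ltngtP x y) => [xly|ylx|/val_inj exy]; last by rewrite exy eqxx in xy.
    + exists (y, x); last by rewrite setUC.
      rewrite inE /=; apply/andP; split => //; move: hr; rewrite (maxn_idPr (ltnW xly)) (minn_idPl (ltnW xly)); lia.
    + exists (x, y); last by [].
      rewrite inE /=; apply/andP; split => //; move: hr; rewrite (maxn_idPl (ltnW ylx)) (minn_idPr (ltnW ylx)); lia.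
  - case=> [[a b]]; rewrite inE /= => /andP[ba hr] ->.
    have nab : a != b by apply/eqP => eab; rewrite eab ltnn in ba.
    rewrite cards2 nab /=; apply/forall_inP => x; rewrite !inE => hx.
    apply/forall_inP => y; rewrite !inE => hy; apply/implyP => nxy.
    have gab : ge m a b by rewrite /ge nab /=; by rewrite (maxn_idPl (ltnW ba)) (minn_idPr (ltnW ba)).
    case/orP: hx => /eqP hx; case/orP: hy => /eqP hy; subst x y; rewrite ?eqxx in nxy => //. by rewrite ge_sym.
rewrite card_in_imset; last first.
  move=> [a b] [c d]; rewrite !inE /= => /andP[h1 _] /andP[h2 _] E.
  have : a \in [set c; d] by rewrite -E !inE eqxx.
  have : b \in [set c; d] by rewrite -E !inE eqxx orbT.
  rewrite !inE => /orP[]/eqP hb /orP[]/eqP ha; subst; move: h1 h2; try lia.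
  by [].
rewrite -sum1_card.
rewrite (eq_bigl (fun p : 'I_n * 'I_n => true && ((p.2 < p.1) && ('C(p.1, 2) + p.2 < m)))); last by move=> p; rewrite inE.
rewrite -(pair_big_dep xpredT (fun j i : 'I_n => (i < j) && ('C(j, 2) + i < m)) (fun _ _ => 1)) /=.
rewrite (eq_bigr (fun j : 'I_n => minn j (m - 'C(j, 2)))); last by move=> j _; exact: inner_card.
rewrite sum_min; lia.
Qed.

Lemma no_induced (U : finType) (h : rel U) n m (u0 : U) :
  (forall u, exists v, h u v) ->
  (forall u, exists w1 w2, [/\ w1 != u, w2 != u, w1 != w2 & ~~ h w1 w2]) ->
  induced_free h (@ge n m).
Proof.
move=> Hn Hw [f [finj Hf]].
case: (@arg_maxnP U u0 xpredT (fun u => val (f u)) isT) => u _ Hmax.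
have lt : forall w, w != u -> f w < f u.
  move=> w wu; have hw : val (f w) <= val (f u) := Hmax w isT. rewrite ltn_neqAle hw andbT.
  by apply: contra wu => /eqP /val_inj /finj ->.
case: (Hn u) => v huv.
case: (Hw u) => w1 [w2 [h1 h2 h3 h4]].
have : ge m (f w1) (f w2).
  apply: (@ge_below _ _ (f u) (f v)); rewrite ?Hf ?lt //.
  by apply: contra h3 => /eqP /finj ->.
by rewrite Hf (negbTE h4).
Qed.

Ltac fin_D := rewrite -?val_eqE /= ?inordK; repeat split; try lia.

Lemma star_free r n m : 3 <= r -> induced_free (@star_rel r) (@ge n m).
Proof.
move=> hr; apply: (@no_induced _ _ n m ord0).
- move=> u; have [e0|n0] := eqVneq (u : nat) 0.
  + exists (inord 1); rewrite /star_rel; fin_D.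
  + exists ord0; rewrite /star_rel; fin_D.
- move=> u; rewrite /star_rel.
  have [e1|n1] := eqVneq (u : nat) 1; first by exists (inord 2), (inord 3); fin_D.
  have [e3|n3] := eqVneq (u : nat) 3; first by exists (inord 1), (inord 2); fin_D.
  by exists (inord 1), (inord 3); fin_D.
Qed.

Lemma path_free r n m : 3 <= r -> induced_free (@path_rel r) (@ge n m).
Proof.
move=> hr; apply: (@no_induced _ _ n m ord0).
- move=> u; have [e0|n0] := eqVneq (u : nat) r.
  + exists (inord r.-1); rewrite /path_rel; fin_D.
  + exists (inord u.+1); rewrite /path_rel; fin_D. have := ltn_ord u; lia.
- move=> u; rewrite /path_rel.
  have [e1|n1] := eqVneq (u : nat) 0; first by exists (inord 1), (inord 3); fin_D.
  have [e3|n3] := eqVneq (u : nat) 3; first by exists (inord 0), (inord 2); fin_D.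
  by exists (inord 0), (inord 3); fin_D.
Qed.

Ltac fin_E := rewrite -?val_eqE /=; repeat split; try lia.

Lemma matching_free r n m : 2 <= r -> induced_free (@matching_rel r) (@ge n m).
Proof.
move=> hr.
have h0 : 0 < r.*2 by lia.
have h1 : 1 < r.*2 by lia.
have h2 : 2 < r.*2 by lia.
have h3 : 3 < r.*2 by lia.
apply: (@no_induced _ _ n m (Ordinal h0)).
- move=> u; rewrite /matching_rel.
  have hu := ltn_ord u.
  have := odd_double_half u.
  case: (odd u) => /= hd.
  + have hv : u.-1 < r.*2 by lia.
    exists (Ordinal hv); fin_E.
  + have hv : u.+1 < r.*2 by lia.
    exists (Ordinal hv); fin_E.
- move=> u; rewrite /matching_rel.
  have [e1|n1] := eqVneq (u : nat) 0.
  + have [e3|n3] := eqVneq (u : nat) 2; first by lia.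
    by exists (Ordinal h1), (Ordinal h2); fin_E.
  + have [e3|n3] := eqVneq (u : nat) 2.
    * by exists (Ordinal h0), (Ordinal h3); fin_E.
    * by exists (Ordinal h0), (Ordinal h2); fin_E.
Qed.

Lemma ge_chordal n m : chordal (@ge n m).
Proof.
move=> s us hs cs.
case: s us hs cs => [//|x0 s0] us hs cs.
case: (@arg_maxnP _ x0 (fun x => x \in x0 :: s0) (fun x => val x) (mem_head _ _)).
move=> p pin pmax.
set s := x0 :: s0 in us hs cs pin pmax *.
case: (rot_to pin) => i t Ht.
have ut : uniq (p :: t) by rewrite -Ht rot_uniq.
have ct : cycle (ge m) (p :: t) by rewrite -Ht rot_cycle.
have st : 4 <= size (p :: t) by rewrite -Ht size_rot.
have memt : forall z, z \in p :: t -> z \in s by move=> z; rewrite -Ht mem_rot.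
case: t Ht ut ct st memt => [|a [|b [|c rest]]] //= Ht ut ct st memt.
move: ut; rewrite !inE !negb_or => /and4P[/and4P[pa pb pc prest] /and3P[ab ac arest] /andP[bc brest] /andP[crest urest]].
have ma : a \in s by apply: memt; rewrite !inE eqxx !orbT.
have mc : c \in s by apply: memt; rewrite !inE eqxx !orbT.
have lt : forall z, z \in s -> p != z -> z < p.
  move=> z zs pz; have hz : val z <= val p := pmax z zs.
  rewrite ltn_neqAle hz andbT; by apply: contra pz => /eqP /val_inj ->.
have epa : ge m p a by case/andP: ct.
have na : next s a = b.
  rewrite -(next_rot i us) Ht next_nth !inE eqxx orbT /= (negbTE pa) eqxx /=. by [].
have nc : next s c != a.
  rewrite -(next_rot i us) Ht next_nth !inE eqxx !orbT /= (negbTE pc) (negbTE ac) (negbTE bc) eqxx /=.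
  case: rest prest arest {st ct memt crest brest urest Ht} => [|d rest] /=; first by [].
  by rewrite !inE !negb_or => /andP[_ _] /andP[]; rewrite eq_sym.
move: na nc; rewrite /s /= => na nc. exists a, c; split; [exact: ma | exact: mc | exact: ac | | by rewrite na bc nc].
  apply: (@ge_below _ _ p a) => //; exact: lt.
Qed.

Theorem mainTheorem4 :
  (forall r : nat, 3 <= r -> feasible (fun T e => induced_free (@star_rel r) e)) /\
  (forall r : nat, 3 <= r -> feasible (fun T e => induced_free (@path_rel r) e)) /\
  (forall r : nat, 2 <= r -> feasible (fun T e => induced_free (@matching_rel r) e)) /\
  feasible chordal.
Proof.
split; [|split; [|split]].
- move=> r hr n m _ hm; exists (@ge n m); split; [exact: ge_simple | split; [exact: ge_edges | exact: star_free]].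
- move=> r hr n m _ hm; exists (@ge n m); split; [exact: ge_simple | split; [exact: ge_edges | exact: path_free]].
- move=> r hr n m _ hm; exists (@ge n m); split; [exact: ge_simple | split; [exact: ge_edges | exact: matching_free]].
- move=> n m _ hm; exists (@ge n m); split; [exact: ge_simple | split; [exact: ge_edges | exact: ge_chordal]].
Qed.
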